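(* Let $n\ge 2$ and let $C_n$ be the cycle graph with vertices $p_1,\dots,p_n$ and edges $e_i$ joining $p_i$ and $p_{i+1}$ (indices mod $n$). For each $i$ let $G_i$ be a connected graph with two given distinct vertices $s_i,t_i$. Let $CG_n$ be the graph obtained from $C_n$ by replacing each edge $e_i$ by a copy of $G_i$, identifying $s_i$ with $p_i$ and $t_i$ with $p_{i+1}$ (the copies being otherwise disjoint). Then $$t(CG_n)=\prod_{i=1}^n t(G_i)\sum_{i=1}^n\frac{t(G_{i,s_it_i})}{t(G_i)},$$ where $G_{i,s_it_i}$ is obtained from $G_i$ by identifying $s_i$ and $t_i$. In particular, if each $G_i$ is a copy of the same graph $G$ with fixed vertices $s,t$, then $t(CG_n)=n\,t(G)^{n-1}\,t(G_{st})$.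
   Context: Graphs are finite and may have multiple edges and loops; $t(H)$ is the number of spanning trees of $H$ (a one-vertex graph has $t=1$). $G_{st}$ is obtained from $G$ by identifying $s$ and $t$. *)

(* Defs.v *)
From HB Require Import structures.
From mathcomp Require Import all_boot all_order all_algebra.
Set Implicit Arguments. Unset Strict Implicit. Unset Printing Implicit Defensive.
Import GRing.Theory Num.Theory.

(* A finite multigraph (multiple edges and loops allowed): a finite vertex
   type, a finite edge type, and the pair of endpoints of each edge
   (recorded as an ordered pair; the order is irrelevant below). *)
Record mgraph := MGraph {
  vert : finType;
  edge : finType;
  ends : edge -> vert * vert
}.

Definition adj (G : mgraph) (F : {set edge G}) : rel (vert G) :=
  fun x y => [exists e in F, (ends e == (x, y)) || (ends e == (y, x))].

Definition spans_connected (G : mgraph) (F : {set edge G}) : bool :=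
  [forall x : vert G, forall y : vert G, connect (adj F) x y].

Definition acyclic (G : mgraph) (F : {set edge G}) : bool :=
  [forall e in F, ~~ connect (adj (F :\ e)) (ends e).1 (ends e).2].

Definition spanning_tree (G : mgraph) (F : {set edge G}) : bool :=
  spans_connected F && acyclic F.

Definition connected (G : mgraph) : Prop := spans_connected [set: edge G].

Definition ntrees (G : mgraph) : nat :=
  #|[set F : {set edge G} | spanning_tree F]|.

(* G_{st}: identify s and t.  Vertices: None is the merged vertex,
   Some v is an old vertex v different from s and t; edges unchanged. *)
Section Identify.
Variables (G : mgraph) (s t : vert G).
Definition id_vert : finType := option {v : vert G | (v != s) && (v != t)}.
Definition id_map (v : vert G) : id_vert :=
  match insub v with Some w => Some w | None => None end.
Definition identify : mgraph :=
  @MGraph id_vert (edge G) (fun e => (id_map (ends e).1, id_map (ends e).2)).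
End Identify.

(* Vertices: inl i is p_i; inr (i, v) is an inner vertex v of
   G i (v different from s i and t i). *)
Section Necklace.
Variables (n : nat) (G : 'I_n -> mgraph)
          (s t : forall i, vert (G i)).
Definition inner (i : 'I_n) : finType :=
  {v : vert (G i) | (v != s i) && (v != t i)}.
Definition neck_vert : finType := ('I_n + {i : 'I_n & inner i})%type.
Definition neck_edge : finType := {i : 'I_n & edge (G i)}.
Definition neck_map (i : 'I_n) (v : vert (G i)) : neck_vert :=
  if v == s i then inl i
  else if v == t i then inl (ordS i)
  else match @insub _ (fun v => (v != s i) && (v != t i)) (inner i) v with
       | Some w => inr (Tagged inner w)
       | None => inl i (* unreachable *)
       end.
Definition neck_ends (x : neck_edge) : neck_vert * neck_vert :=
  (neck_map (ends (tagged x)).1, neck_map (ends (tagged x)).2).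
Definition necklace : mgraph := @MGraph neck_vert neck_edge neck_ends.
End Necklace.

(* Main.v *)
Require Import Defs.
From HB Require Import structures.
From mathcomp Require Import all_boot all_order all_algebra.
From mathcomp Require Import zify.
Import GRing.Theory Num.Theory.
Set Implicit Arguments. Unset Strict Implicit. Unset Printing Implicit Defensive.

Lemma connect_map (T T' : finType) (r : rel T) (r' : rel T') (f : T -> T') :
  (forall x y, r x y -> connect r' (f x) (f y)) ->
  forall x y, connect r x y -> connect r' (f x) (f y).
Proof.
move=> H x y /connectP [p]; elim: p x => [x _ ->|z p IH x /= /andP[rxz pz] ly].
  exact: connect0.
exact: connect_trans (H _ _ rxz) (IH _ pz ly).
Qed.

Lemma connect_closed (T : finType) (r : rel T) (P : T -> bool) x y :
  (forall a b, P a -> r a b -> P b) -> connect r x y -> P x -> P y.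
Proof.
move=> H /connectP [p]; elim: p x => [x _ -> //|z p IH x /= /andP[rxz pz] ly Px].
exact: IH pz ly (H _ _ Px rxz).
Qed.

Section Gen.
Variable G : mgraph.
Implicit Types (F A : {set edge G}) (x y : vert G).

Lemma adjC F x y : adj F x y = adj F y x.
Proof. by rewrite /adj; apply/eq_existsb => e; rewrite orbC. Qed.

Lemma connectC F x y : connect (adj F) x y = connect (adj F) y x.
Proof. by apply: sym_connect_sym => a b; exact: adjC. Qed.

Lemma adj_ends F e : e \in F -> adj F (ends e).1 (ends e).2.
Proof. by move=> eF; apply/existsP; exists e; rewrite eF -surjective_pairing eqxx. Qed.

Lemma adjE F x y : adj F x y ->
  exists2 e, e \in F & (ends e = (x, y)) \/ (ends e = (y, x)).
Proof.
by move=> /existsP[e /andP[eF /orP[/eqP E|/eqP E]]]; exists e => //; [left|right].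
Qed.

Lemma adj_sub F F' x y : F \subset F' -> adj F x y -> adj F' x y.
Proof.
move=> sF /existsP[e /andP[eF h]]; apply/existsP; exists e.
by rewrite (subsetP sF _ eF).
Qed.

Lemma connect_subset F F' x y : F \subset F' -> connect (adj F) x y -> connect (adj F') x y.
Proof. by move=> sF; apply: connect_sub => a b /(adj_sub sF); apply: connect1. Qed.

Lemma first_edge F x y : x != y -> connect (adj F) x y ->
  exists e v, [/\ e \in F, (ends e = (x, v)) \/ (ends e = (v, x))
                & connect (adj (F :\ e)) v y].
Proof.
move=> xy /connectP[p pp ey]; subst y.
case: (shortenP pp) xy => p' pp' up' _ {pp p}.
case: p' pp' up' => [|v p'] /=; first by rewrite eqxx.
case/andP=> /adjE[e eF He] pp' /and3P[xnin _ _] _.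
exists e, v; split => //; apply/connectP; exists p' => //.
apply: (@sub_in_path _ (predC1 x)) pp'.
  move=> a b; rewrite !inE => ax bx /existsP[e' /andP[e'F h]].
  apply/existsP; exists e'; rewrite !inE e'F h !andbT.
  apply/eqP=> ee; subst e'.
  by case: He => E; case/orP: h; rewrite E => /eqP[] ? ?; subst;
     rewrite ?eqxx in ax bx.
by apply/allP => z zin /=; apply: contraNneq xnin => <-.
Qed.

Lemma reroute F e : e \in F -> connect (adj (F :\ e)) (ends e).1 (ends e).2 ->
  forall x y, connect (adj F) x y -> connect (adj (F :\ e)) x y.
Proof.
move=> eF c; apply: connect_sub => a b /existsP[e' /andP[e'F h]].
have [ee|ne] := eqVneq e' e.
  subst e'; case/orP: h => /eqP E; rewrite E /= in c => //.
  by rewrite connectC.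
by apply: connect1; apply/existsP; exists e'; rewrite !inE ne e'F.
Qed.

Lemma ntrees_gt0 : connected G -> 0 < ntrees G.
Proof.
move=> cG.
case: (@arg_minnP _ [set: edge G] (fun F : {set edge G} => spans_connected F) (fun F => #|F|) cG)
  => F0 cF0 minF0.
rewrite /ntrees card_gt0; apply/set0Pn; exists F0; rewrite inE /spanning_tree cF0 /=.
apply/forallP => e; apply/implyP => eF; apply/negP => c.
have: spans_connected (F0 :\ e).
  apply/forallP => x; apply/forallP => y.
  by apply: reroute eF c _ _ _; move/forallP: cF0 => /(_ x)/forallP; apply.
move/minF0; rewrite (cardsD1 e F0) eF /=.
by rewrite add1n ltnn.
Qed.
End Gen.

Section Ident.
Variables (G : mgraph) (s t : vert G).
Hypothesis st : s != t.
Local Notation H := (identify s t).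
Local Notation im := (@id_map G s t).

Lemma im_s : im s = None.
Proof. by rewrite /id_map insubN // eqxx. Qed.
Lemma im_t : im t = None.
Proof. by rewrite /id_map insubN // eqxx andbF. Qed.
Lemma imK (w : {v : vert G | (v != s) && (v != t)}) : im (val w) = Some w.
Proof. by rewrite /id_map valK. Qed.
Lemma im_surj (u : vert H) : exists a, im a = u.
Proof. by case: u => [w|]; [exists (val w); exact: imK | exists s; exact: im_s]. Qed.
Lemma im_eq a b : im a = im b ->
  a = b \/ ((a == s) || (a == t)) && ((b == s) || (b == t)).
Proof.
rewrite /id_map; case: insubP => [w hw <-|ha]; case: insubP => [w' hw' <-|hb] //=.
- by move=> [->]; left.
- by move=> _; right; move: ha hb; rewrite !negb_and !negbK => -> ->.
Qed.

Lemma im_adj (A : {set edge G}) a b : adj A a b -> @adj H A (im a) (im b).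
Proof.
move=> /existsP[e /andP[eA /orP[/eqP E|/eqP E]]]; apply/existsP; exists e;
by rewrite eA /= E eqxx ?orbT.
Qed.
Lemma im_connect (A : {set edge G}) a b : connect (adj A) a b -> connect (@adj H A) (im a) (im b).
Proof. by apply: connect_map => x y /im_adj; exact: connect1. Qed.

Lemma STid_cover (A : {set edge G}) : @spans_connected H A ->
  forall a, connect (adj A) a s || connect (adj A) a t.
Proof.
move=> /forallP/(_ None)/forallP cA a.
pose cs x := connect (adj A) x s || connect (adj A) x t.
have key v a' : im v = im a' -> cs v -> cs a'.
  case/im_eq => [<-//|/andP[_ ha]] _.
  by rewrite /cs; case/orP: ha => /eqP->; rewrite connect0 ?orbT.
have step a' b' : adj A a' b' -> cs a' -> cs b'.
  move=> ab; rewrite /cs => /orP[c|c]; apply/orP; [left|right];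
  apply: connect_trans c; apply: connect1; by rewrite adjC.
pose P (u : vert H) := [exists v, (im v == u) && cs v].
have: P (im a).
  apply: (@connect_closed _ (@adj H A) P) (cA (im a)) _; last first.
    by apply/existsP; exists s; rewrite im_s eqxx /cs connect0.
  move=> u w /existsP[v /andP[/eqP vu cv]] /existsP[e /andP[eA h]].
  have adjE : adj A (@ends G e).1 (@ends G e).2 by apply: adj_ends.
  case/orP: h => /eqP [E1 E2].
  - apply/existsP; exists (@ends G e).2; rewrite E2 eqxx /=.
    by apply: step adjE _; apply: key cv; rewrite vu E1.
  - apply/existsP; exists (@ends G e).1; rewrite E1 eqxx /=.
    have k2 : cs (@ends G e).2 by apply: key cv; rewrite vu E2.
    by apply: step k2; rewrite adjC.
by move=> /existsP[v /andP[/eqP vu cv]]; apply: key cv.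
Qed.

Lemma STid_nconn (A : {set edge G}) : @acyclic H A -> ~~ connect (adj A) s t.
Proof.
move=> acA; apply/negP => c.
have [e [v [eA He cv]]] := first_edge st c.
move/forallP: acA => /(_ e) /implyP /(_ eA); apply/negP/negPn.
have := im_connect cv; rewrite im_t /=.
by case: He => ->; rewrite /= im_s //; rewrite (@connectC H).
Qed.
End Ident.

Definition D n i k := if i < k then k - i.+1 else k + n - i.+1.
Definition sc n a := if a.+1 == n then 0 else a.+1.
Lemma A1 n i a : i < n -> a < n -> a <> i -> D n i (sc n a) = (D n i a).+1.
Proof. rewrite /D /sc => hi ha ai; repeat case: ifP; move=> *; lia. Qed.
Lemma A2 n i : i < n -> D n i (sc n i) = 0.
Proof. rewrite /D /sc => hi; repeat case: ifP; move=> *; lia. Qed.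
Lemma A3 n i k : i < n -> k < n -> D n i k = 0 -> k = sc n i.
Proof. rewrite /D /sc => hi hk; repeat case: ifP; move=> *; lia. Qed.
Lemma A4 n i : i < n -> D n i i = n.-1.
Proof. rewrite /D => hi; repeat case: ifP; move=> *; lia. Qed.
Lemma A5 n i a b : i < n -> a < n -> b < n -> D n i a = D n i b -> a = b.
Proof. rewrite /D => hi ha hb; repeat case: ifP; move=> *; lia. Qed.
Lemma A6 n i a : i < n -> a < n -> D n i a < n.
Proof. rewrite /D => hi ha; repeat case: ifP; move=> *; lia. Qed.

Section Cyc.
Variable n : nat.
Definition cyc (S : pred 'I_n) : rel 'I_n :=
  fun k l => (S k && (l == ordS k)) || (S l && (k == ordS l)).
Lemma cycC S : symmetric (cyc S). Proof. by move=> k l; rewrite /cyc orbC. Qed.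
Lemma ordS_val (k : 'I_n) : val (ordS k) = sc n k.
Proof.
rewrite /= /sc; case: eqP => [->|h]; first by rewrite modnn.
by rewrite modn_small //; have := ltn_ord k; lia.
Qed.

Lemma cyc_gap (S : pred 'I_n) i i0 :
  i != i0 -> ~~ S i -> ~~ S i0 -> ~~ connect (cyc S) i (ordS i).
Proof.
move=> ii0 Si Si0; apply/negP => c.
have hi := ltn_ord i; have hi0 := ltn_ord i0.
have vii0 : nat_of_ord i <> nat_of_ord i0 by move=> /ord_inj E; rewrite E eqxx in ii0.
have : D n i i <= D n i i0.
  rewrite (sym_connect_sym (@cycC S)) in c.
  apply: (@connect_closed _ (cyc S) (fun k : 'I_n => D n i k <= D n i i0)) c _;
    last by rewrite ordS_val A2.
  move=> a b Pa /orP[/andP[Sa /eqP ->]|/andP[Sb /eqP Ea]].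
  - have ai0 : nat_of_ord a <> nat_of_ord i0 by move=> /ord_inj E; move: Si0; rewrite -E Sa.
    have ai : nat_of_ord a <> nat_of_ord i by move=> /ord_inj E; move: Si; rewrite -E Sa.
    have := A5 hi (ltn_ord a) hi0; have := A1 hi (ltn_ord a) ai.
    rewrite ordS_val. lia.
  - have bi : nat_of_ord b <> nat_of_ord i by move=> /ord_inj E; move: Si; rewrite -E Sb.
    by move: Pa; rewrite Ea ordS_val (A1 hi (ltn_ord b) bi); lia.
rewrite A4 // => h; have := A6 hi hi0; have := A5 hi hi hi0; rewrite A4 //; lia.
Qed.

Lemma cyc_all (S : pred 'I_n) i0 :
  (forall k, k != i0 -> S k) -> forall k l, connect (cyc S) k l.
Proof.
move=> hS; have hi0 := ltn_ord i0.
suff h k : connect (cyc S) (ordS i0) k.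
  move=> k l; apply: connect_trans (h l).
  by rewrite (sym_connect_sym (@cycC S)); exact: h.
move: {2}(D n i0 k) (erefl (D n i0 k)) => m; elim: m k => [|m IH] k hk.
  suff -> : k = ordS i0 by apply: connect0.
  by apply: val_inj; rewrite ordS_val; exact: A3 hi0 (ltn_ord k) hk.
pose k' := ord_pred k; have Ek : ordS k' = k := ord_predK k.
have k'i0 : val k' <> val i0.
  move=> /val_inj E; move: hk; rewrite -Ek E ordS_val A2 //.
have hk' : D n i0 k' = m.
  by have := A1 hi0 (ltn_ord k') k'i0; rewrite -ordS_val Ek hk => -[].
apply: connect_trans (IH k' hk') _; apply: connect1.
rewrite /cyc hS ?Ek ?eqxx //.
by apply/eqP => E; apply: k'i0; rewrite E.
Qed.
End Cyc.

Section Neck.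
Variables (n : nat) (G : 'I_n -> mgraph) (s t : forall i, vert (G i)).
Hypothesis n2 : (1 < n)%N.
Hypothesis st : forall i, s i != t i.
Local Notation CG := (@necklace n G s t).
Local Notation nm i := (@neck_map n G s t i).
Local Notation inner := (@inner n G s t).

Definition tg (i : 'I_n) (e : edge (G i)) : edge CG := Tagged (fun j => edge (G j)) e.
Definition Fr (F : {set edge CG}) i : {set edge (G i)} := [set e | tg e \in F].
Definition isin i (a : vert (G i)) := (a != s i) && (a != t i).

Lemma nm_s i : nm i (s i) = inl i.
Proof. by rewrite /neck_map eqxx. Qed.
Lemma nm_t i : nm i (t i) = inl (ordS i).
Proof. by rewrite /neck_map eq_sym (negbTE (st i)) eqxx. Qed.
Lemma nm_val i (w : inner i) : nm i (val w) = inr (Tagged inner w).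
Proof.
have /andP[h1 h2] := valP w.
by rewrite /neck_map (negbTE h1) (negbTE h2) valK.
Qed.
Lemma nm_in i a (h : isin a) : nm i a = inr (Tagged inner (Sub a h : inner i)).
Proof. exact: (nm_val (Sub a h : inner i)). Qed.

Lemma nm_inj_tag i j a b : isin a -> nm i a = nm j b -> j = i.
Proof.
move=> ha; rewrite (nm_in ha).
case: (eqVneq b (s j)) => [->|bs]; first by rewrite nm_s.
case: (eqVneq b (t j)) => [->|bt]; first by rewrite nm_t.
have hb : isin b by rewrite /isin bs bt.
rewrite (nm_in hb).
by move/(congr1 (fun x : vert CG => if x is inr y then tag y else i)).
Qed.

Lemma nm_inj i a b : isin a -> nm i a = nm i b -> b = a.
Proof.
move=> ha; rewrite (nm_in ha).
case: (eqVneq b (s i)) => [->|bs]; first by rewrite nm_s.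
case: (eqVneq b (t i)) => [->|bt]; first by rewrite nm_t.
have hb : isin b by rewrite /isin bs bt.
rewrite (nm_in hb).
move/(congr1 (fun x : vert CG => if x is inr y then tagged_as (Tagged inner (Sub a ha : inner i)) y
   else (Sub a ha : inner i))).
by rewrite !tagged_asE => /(congr1 val) /= ->.
Qed.

Definition proj k (x : vert CG) : option (vert (G k)) :=
  [pick a | (nm k a == x) && isin a].

Lemma projP k x a : proj k x = Some a -> nm k a = x /\ isin a.
Proof. by rewrite /proj; case: pickP => // b /andP[/eqP <- h] [<-]. Qed.
Lemma proj_nm k a : isin a -> proj k (nm k a) = Some a.
Proof.
move=> ha; rewrite /proj; case: pickP => [b /andP[/eqP E hb]|/(_ a)].
  by rewrite (nm_inj hb E).
by rewrite eqxx ha.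
Qed.
Lemma proj_other k j b : j != k -> proj k (nm j b) = None.
Proof.
move=> jk; case E: (proj k (nm j b)) => [a|] //.
have [E' ha] := projP E; have jk' := nm_inj_tag ha E'.
by rewrite jk' eqxx in jk.
Qed.
Lemma proj_inl k m : proj k (inl m) = None.
Proof.
case E: (proj k (inl m)) => [a|] //.
by have [E' ha] := projP E; rewrite (nm_in ha) in E'.
Qed.

Lemma nm_surj (x : vert CG) : exists i a, nm i a = x.
Proof.
case: x => [k|[i w]]; first by exists k, (s k); exact: nm_s.
by exists i, (val w); exact: nm_val.
Qed.

Lemma ends_tg i (e : edge (G i)) : ends (tg e) = (nm i (ends e).1, nm i (ends e).2).
Proof. by []. Qed.
Lemma tg_inj i : injective (@tg i).
Proof. by move=> e e' E; apply: eq_from_Tagged E. Qed.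
Lemma edge_tg (z : edge CG) : exists i (e : edge (G i)), z = tg e.
Proof. by case: z => i e; exists i, e. Qed.
Lemma in_Fr F i (e : edge (G i)) : (e \in Fr F i) = (tg e \in F).
Proof. by rewrite inE. Qed.

Lemma Fr_D1 F i (e : edge (G i)) : Fr (F :\ tg e) i = Fr F i :\ e.
Proof. by apply/setP => e'; rewrite !inE (inj_eq (@tg_inj i)). Qed.
Lemma Fr_D1_other F i j (e : edge (G i)) : j != i -> Fr (F :\ tg e) j = Fr F j.
Proof.
move=> ji; apply/setP => e'; rewrite !inE.
case: eqP => [E|] //=; move: (congr1 tag E); rewrite /tg /= => E'.
by rewrite E' eqxx in ji.
Qed.

Lemma adjCG F x y : adj F x y ->
  exists i a b, [/\ adj (Fr F i) a b, x = nm i a & y = nm i b].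
Proof.
move=> /adjE [[i e] zF [E|E]]; move: E; rewrite -/(tg e) ends_tg => -[<- <-].
  by exists i, (ends e).1, (ends e).2; split => //; apply: adj_ends; rewrite in_Fr.
by exists i, (ends e).2, (ends e).1; split => //; rewrite adjC; apply: adj_ends; rewrite in_Fr.
Qed.

Lemma nm_adj F i a b : adj (Fr F i) a b -> adj F (nm i a) (nm i b).
Proof.
move=> /existsP[e /andP[eF /orP[/eqP E|/eqP E]]]; apply/existsP; exists (tg e);
by rewrite -in_Fr eF ends_tg E eqxx ?orbT.
Qed.
Lemma nm_connect F i a b : connect (adj (Fr F i)) a b -> connect (adj F) (nm i a) (nm i b).
Proof. by apply: connect_map => x y /nm_adj; apply: connect1. Qed.


Definition conn F j := connect (adj (Fr F j)) (s j) (t j).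

Definition idx F (x : vert CG) : 'I_n :=
  match x with
  | inl k => k
  | inr y => if connect (adj (Fr F (tag y))) (val (tagged y)) (s (tag y))
             then tag y else ordS (tag y)
  end.

Lemma idx_in F j a : isin a ->
  idx F (nm j a) = if connect (adj (Fr F j)) a (s j) then j else ordS j.
Proof. by move=> h; rewrite (nm_in h). Qed.

Lemma idx_nm F j a : idx F (nm j a) = j \/ idx F (nm j a) = ordS j.
Proof.
case: (eqVneq a (s j)) => [->|hs]; first by rewrite nm_s; left.
case: (eqVneq a (t j)) => [->|ht]; first by rewrite nm_t; right.
by rewrite idx_in ?/isin ?hs ?ht //; case: ifP; [left|right].
Qed.

Lemma idx_nconn F j a : ~~ conn F j ->
  idx F (nm j a) = if connect (adj (Fr F j)) a (s j) then j else ordS j.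
Proof.
move=> nc.
case: (eqVneq a (s j)) => [->|hs]; first by rewrite nm_s connect0.
case: (eqVneq a (t j)) => [->|ht]; first by rewrite nm_t connectC -/(conn F j) (negbTE nc).
by rewrite idx_in // /isin hs ht.
Qed.

Lemma C1 (F F' : {set edge CG}) (S : pred 'I_n) : F' \subset F ->
  (forall i (e : edge (G i)), tg e \in F' -> conn F i -> S i) ->
  forall x y, connect (adj F') x y -> connect (cyc S) (idx F x) (idx F y).
Proof.
move=> sF hS; apply: connect_map => x y /adjCG [i [a [b [ab -> ->]]]].
have ab' : adj (Fr F i) a b.
  by apply: adj_sub ab; apply/subsetP => e; rewrite !in_Fr; apply: (subsetP sF).
case: (boolP (conn F i)) => ci.
  have Si : S i by case/existsP: ab => e /andP[eF _]; apply: (hS i e) => //; rewrite -in_Fr.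
  case: (idx_nm F a) => ->; case: (idx_nm F b) => ->; rewrite ?connect0 //;
  apply: connect1; by rewrite /cyc Si eqxx ?orbT.
rewrite !idx_nconn //.
have -> : connect (adj (Fr F i)) a (s i) = connect (adj (Fr F i)) b (s i).
  apply/idP/idP => h; apply: connect_trans h; apply: connect1; by rewrite // adjC.
exact: connect0.
Qed.

Lemma L_cyc F' i0 : (forall j, j != i0 -> conn F' j) ->
  forall k l, connect (adj F') (inl k) (inl l).
Proof.
move=> h k l.
apply: (@connect_map _ _ (cyc (predC1 i0)) _ inl) (cyc_all (i0 := i0) _ k l); last first.
  by move=> j ji; rewrite /= ji.
move=> k' l' /orP[/andP[Sk /eqP ->]|/andP[Sl /eqP ->]].
  by rewrite -nm_s -nm_t; apply: nm_connect; apply: h.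
by rewrite (@connectC CG) -nm_s -nm_t; apply: nm_connect; apply: h.
Qed.

Lemma cover_of_conn F : spans_connected F ->
  forall j a, connect (adj (Fr F j)) a (s j) || connect (adj (Fr F j)) a (t j).
Proof.
move=> cF j a; apply/negPn/negP => ha.
have ia : isin a.
  by rewrite /isin; apply/andP; split; apply: contraNneq ha => ->; rewrite connect0 ?orbT.
pose cs w := connect (adj (Fr F j)) w (s j) || connect (adj (Fr F j)) w (t j).
pose P x := if proj j x is Some w then ~~ cs w else false.
have : P (inl j).
  apply: (@connect_closed _ (adj F) P (nm j a)); last by rewrite /P proj_nm.
    move=> x y; rewrite /P; case E: (proj j x) => [w|] // Pw.
    have [Ex iw] := projP E.
    move=> /adjCG [i [a' [b' [ab Ex' ->]]]]; rewrite Ex' in Ex.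
    have ji := nm_inj_tag iw Ex; subst i.
    have wa := nm_inj iw Ex; subst a'.
    have nb : ~~ cs b'.
      apply: contra Pw; rewrite /cs => /orP[c|c]; apply/orP; [left|right];
      by apply: connect_trans c; apply: connect1.
    have ib : isin b'.
      rewrite /isin; apply/andP; split; apply: contraNneq nb => ->;
      by rewrite /cs connect0 ?orbT.
    by rewrite proj_nm.
  by move/forallP: cF => /(_ (nm j a)) /forallP /(_ (inl j)).
by rewrite /P proj_inl.
Qed.

Lemma proj_connect F' k (H : mgraph) (A : {set edge H})
   (th : vert (G k) -> vert H) (rho : vert CG -> vert H) :
  (forall a b, adj (Fr F' k) a b -> adj A (th a) (th b)) ->
  (forall a, rho (nm k a) = th a) ->
  (forall j a b, j != k -> adj (Fr F' j) a b -> rho (nm j a) = rho (nm j b)) ->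
  forall x y, connect (adj F') x y -> connect (adj A) (rho x) (rho y).
Proof.
move=> hth hr ho; apply: connect_map => x y /adjCG [i [a [b [ab -> ->]]]].
case: (eqVneq i k) => [E|ik].
  by subst i; rewrite !hr; apply: connect1; apply: hth.
by rewrite (ho _ _ _ ik ab) connect0.
Qed.


Definition STG i (A : {set edge (G i)}) := spanning_tree A.
Definition STI i (A : {set edge (G i)}) := @spanning_tree (identify (s i) (t i)) A.
Definition cond i0 (F : {set edge CG}) :=
  STI (Fr F i0) && [forall j, (j != i0) ==> STG (Fr F j)].

Lemma Fr_D1_sub F i (e : edge (G i)) : Fr F i :\ e \subset Fr (F :\ tg e) i.
Proof. by rewrite Fr_D1. Qed.

Lemma acyc_tg F i (e : edge (G i)) : acyclic F -> tg e \in F ->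
  ~~ connect (adj (F :\ tg e)) (nm i (ends e).1) (nm i (ends e).2).
Proof. by move=> /forallP /(_ (tg e)) /implyP h /h. Qed.

Lemma dir1 F : spanning_tree F -> exists i0, cond i0 F.
Proof.
move=> /andP[cF acF].
have cov := cover_of_conn cF.
have cF' x y : connect (adj F) x y by move/forallP: cF => /(_ x)/forallP/(_ y).
have acj j : acyclic (Fr F j).
  apply/forallP => e; apply/implyP => eF; apply/negP => c.
  have := @acyc_tg F j e acF; rewrite -in_Fr => /(_ eF) /negP; apply.
  by apply: nm_connect; apply: connect_subset c; apply: Fr_D1_sub.
have ex_nc : exists i0, ~~ conn F i0.
  case: (boolP [exists i, ~~ conn F i]) => [/existsP//|/existsPn hall].
  pose j0 : 'I_n := Ordinal (ltnW n2).
  have c0 := negbNE (hall j0).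
  have [e [v [eF He cv]]] := first_edge (st j0) c0.
  have := @acyc_tg F j0 e acF; rewrite -in_Fr => /(_ eF) /negP; case.
  have c1 : connect (adj (F :\ tg e)) (nm j0 v) (inl (ordS j0)).
    by rewrite -nm_t; apply: nm_connect; apply: connect_subset cv; apply: Fr_D1_sub.
  have c2 : connect (adj (F :\ tg e)) (inl (ordS j0)) (inl j0).
    apply: (L_cyc (i0 := j0)) => j jj0; rewrite /conn Fr_D1_other //.
    exact: negbNE (hall j).
  have c3 := connect_trans c1 c2.
  by case: He => ->; rewrite /= nm_s // (@connectC CG).
have uniq_nc i i' : ~~ conn F i -> ~~ conn F i' -> i = i'.
  move=> ci ci'; apply/eqP; apply/negPn/negP => ii'.
  have := @C1 F F (fun j => conn F j) (subxx _) (fun _ _ _ h => h) _ _ (cF' (inl i) (inl (ordS i))).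
  move=> /= h; have := cyc_gap (S := fun j => conn F j) ii' ci ci'.
  by rewrite h.
case: ex_nc => i0 nc0; exists i0.
have conn_j j : j != i0 -> conn F j.
  move=> ji; apply/negPn/negP => h.
  by rewrite (uniq_nc j i0 h nc0) eqxx in ji.
apply/andP; split.
- apply/andP; split.
  + have all_none (u : vert (identify (s i0) (t i0))) :
        connect (@adj (identify (s i0) (t i0)) (Fr F i0)) u None.
      have [a <-] := im_surj u.
      case/orP: (cov i0 a) => c.
        by rewrite -(im_s (s i0) (t i0)); apply: im_connect c.
      by rewrite -(im_t (s i0) (t i0)); apply: im_connect c.
    apply/forallP => u; apply/forallP => w.
    by apply: connect_trans (all_none u) _; rewrite (@connectC (identify (s i0) (t i0))).
  + apply/forallP => e; apply/implyP => eF; apply/negP => c.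
    pose sg (u : vert (identify (s i0) (t i0))) : vert CG :=
      if u is Some w then nm i0 (val w) else inl i0.
    have pc : connect (adj (F :\ tg e)) (inl i0) (inl (ordS i0)).
      by apply: (L_cyc (i0 := i0)) => j ji; rewrite /conn Fr_D1_other //; apply: conn_j.
    have sgim a : connect (adj (F :\ tg e)) (sg (id_map (s i0) (t i0) a)) (nm i0 a).
      case: (eqVneq a (s i0)) => [->|has]; first by rewrite im_s nm_s connect0.
      case: (eqVneq a (t i0)) => [->|hat]; first by rewrite im_t nm_t.
      have ia : isin a by rewrite /isin has hat.
      have -> : id_map (s i0) (t i0) a = Some (Sub a ia) by exact: (imK (Sub a ia)).
      exact: connect0.
    have step u w : @adj (identify (s i0) (t i0)) (Fr F i0 :\ e) u w ->
        connect (adj (F :\ tg e)) (sg u) (sg w).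
      move=> /existsP[e' /andP[e'A h]].
      have ce' : connect (adj (F :\ tg e)) (nm i0 (@ends (G i0) e').1) (nm i0 (@ends (G i0) e').2).
        apply: connect1; apply: nm_adj; apply: adj_ends.
        by apply: (subsetP (Fr_D1_sub _ _)).
      case/orP: h => /eqP [E1 E2]; rewrite -E1 -E2.
        apply: connect_trans (sgim _) _; apply: connect_trans ce' _.
        by rewrite (@connectC CG).
      rewrite (@connectC CG).
      apply: connect_trans (sgim _) _; apply: connect_trans ce' _.
      by rewrite (@connectC CG).
    have := connect_map step c.
    move=> c'.
    have := @acyc_tg F i0 e acF; rewrite -in_Fr => /(_ eF) /negP; case.
    apply: connect_trans (connect_trans _ c') (sgim _).
    by rewrite (@connectC CG); exact: sgim.
- apply/forallP => j; apply/implyP => ji; apply/andP; split; last exact: acj.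
  have cj := conn_j j ji.
  have tos a : connect (adj (Fr F j)) a (s j).
    case/orP: (cov j a) => // c; apply: connect_trans c _.
    by rewrite connectC.
  apply/forallP => x; apply/forallP => y.
  by apply: connect_trans (tos x) _; rewrite connectC.
Qed.


Lemma dir2 F i0 : cond i0 F -> spanning_tree F.
Proof.
move=> /andP[/andP[cI aI] /forallP hj].
have hj' j : j != i0 -> spanning_tree (Fr F j) by move=> ji; have := hj j; rewrite ji.
have conn_j j : j != i0 -> conn F j.
  by move=> ji; case/andP: (hj' j ji) => /forallP /(_ (s j)) /forallP /(_ (t j)).
have nc0 : ~~ conn F i0 := STid_nconn (st i0) aI.
have cov j a : connect (adj (Fr F j)) a (s j) || connect (adj (Fr F j)) a (t j).
  case: (eqVneq j i0) => [E|ji]; first by subst j; exact: STid_cover cI a.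
  by case/andP: (hj' j ji) => /forallP /(_ a) /forallP /(_ (s j)) ->.
apply/andP; split.
  have toinl x : exists k, connect (adj F) x (inl k).
    have [j [a <-]] := nm_surj x.
    case/orP: (cov j a) => c; [exists j; rewrite -nm_s | exists (ordS j); rewrite -nm_t];
    exact: nm_connect c.
  apply/forallP => x; apply/forallP => y.
  have [k ck] := toinl x; have [l cl] := toinl y.
  apply: connect_trans ck _; apply: connect_trans (L_cyc conn_j k l) _.
  by rewrite (@connectC CG).
apply/forallP => z; apply/implyP => zF; apply/negP => c.
have [i [e Ez]] := edge_tg z; subst z.
rewrite ends_tg /= in c.
have eA : e \in Fr F i by rewrite in_Fr.
case: (eqVneq i i0) => [Ei|ii0].
  subst i0.
  pose rho x := if proj i x is Some a then id_map (s i) (t i) a else None.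
  have H1 a b : adj (Fr (F :\ tg e) i) a b ->
      @adj (identify (s i) (t i)) (Fr F i :\ e) (id_map (s i) (t i) a) (id_map (s i) (t i) b).
    by rewrite Fr_D1; apply: im_adj.
  have hr a : rho (nm i a) = id_map (s i) (t i) a.
    case: (eqVneq a (s i)) => [->|has]; first by rewrite nm_s /rho proj_inl im_s.
    case: (eqVneq a (t i)) => [->|hat]; first by rewrite nm_t /rho proj_inl im_t.
    by rewrite /rho proj_nm // /isin has hat.
  have H3 j a b : j != i -> adj (Fr (F :\ tg e) j) a b -> rho (nm j a) = rho (nm j b).
    by move=> ji _; rewrite /rho !proj_other.
  have := proj_connect H1 hr H3 c; rewrite !hr => c'.
  by move: aI => /forallP /(_ e) /implyP /(_ eA) /negP; apply.
pose Fm := [set z in F | tag z != i].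
have FrFm j : j != i -> Fr Fm j = Fr F j.
  by move=> ji; apply/setP => e'; rewrite !inE /= ji andbT.
pose T x := connect (adj Fm) x (inl (ordS i)).
have nT : ~~ T (inl i).
  apply/negP => c'.
  have sub : Fm \subset F by apply/subsetP => z; rewrite inE => /andP[].
  have hS j (e' : edge (G j)) : tg e' \in Fm -> conn F j -> (j != i) && (j != i0).
    rewrite inE /= => /andP[_ ji] cj; rewrite ji /=.
    by apply: contraNneq nc0 => <-.
  have := @C1 F Fm (fun j => (j != i) && (j != i0)) sub hS _ _ c' => /= h.
  have := cyc_gap (S := fun j => (j != i) && (j != i0)) ii0.
  by rewrite /= eqxx /= eq_sym ii0 eqxx h => /(_ isT isT).
pose rho x := if proj i x is Some a then a else if T x then t i else s i.
have H1 a b : adj (Fr (F :\ tg e) i) a b -> adj (Fr F i :\ e) a b by rewrite Fr_D1.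
have hr a : rho (nm i a) = a.
  case: (eqVneq a (s i)) => [->|has]; first by rewrite nm_s /rho proj_inl (negbTE nT).
  case: (eqVneq a (t i)) => [->|hat]; first by rewrite nm_t /rho proj_inl /T connect0.
  by rewrite /rho proj_nm // /isin has hat.
have H3 j a b : j != i -> adj (Fr (F :\ tg e) j) a b -> rho (nm j a) = rho (nm j b).
  move=> ji ab; rewrite /rho !proj_other //.
  rewrite Fr_D1_other // -(FrFm j ji) in ab.
  have ab' := nm_adj ab.
  suff -> : T (nm j a) = T (nm j b) by [].
  rewrite /T; apply/idP/idP => h; apply: connect_trans h; apply: connect1 => //.
  by rewrite adjC.
have := @proj_connect (F :\ tg e) i (G i) (Fr F i :\ e) id rho H1 hr H3 _ _ c.
rewrite !hr => c'.
by case/andP: (hj' i ii0) => _ /forallP /(_ e) /implyP /(_ eA) /negP; apply.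
Qed.

Lemma cond_uniq F i j : cond i F -> cond j F -> i = j.
Proof.
move=> /andP[/andP[_ aI] _] /andP[_ /forallP /(_ i)].
case: (eqVneq i j) => // ij /= /andP[/forallP /(_ (s i)) /forallP /(_ (t i)) c _].
by have := STid_nconn (st i) aI; rewrite c.
Qed.


Lemma card_sum_bool (T : finType) (P : pred T) : #|[set x | P x]| = \sum_x (P x : nat).
Proof.
rewrite -sum1_card big_mkcond /=; apply: eq_bigr => x _; rewrite inE.
by case: (P x).
Qed.

Lemma count_sum : ntrees CG = \sum_(i0 < n) #|[set F | cond i0 F]|.
Proof.
rewrite /ntrees card_sum_bool.
rewrite (eq_bigr (fun i0 => \sum_F (cond i0 F : nat))); last by move=> i0 _; rewrite card_sum_bool.
rewrite exchange_big /=; apply: eq_bigr => F _.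
move: F; change (forall F : {set edge CG}, (spanning_tree F : nat) = \sum_(i0 < n) (cond i0 F : nat)) => F.
case: (boolP (spanning_tree F)) => h.
  have [i0 c0] := dir1 h.
  rewrite (bigD1 i0) //= c0 big1 // => j ji.
  by apply/eqP; rewrite eqb0; apply/negP => cj; rewrite (cond_uniq cj c0) eqxx in ji.
by rewrite big1 // => j _; apply/eqP; rewrite eqb0; apply: contra h; apply: dir2.
Qed.

Definition phi (F : {set edge CG}) : {dffun forall j : 'I_n, {set edge (G j)}} :=
  [ffun j => Fr F j].
Definition psi (f : {dffun forall j : 'I_n, {set edge (G j)}}) : {set edge CG} :=
  [set z : edge CG | tagged z \in f (tag z)].

Lemma Fr_psi f j : Fr (psi f) j = f j.
Proof. by apply/setP => e; rewrite !inE /tg /=. Qed.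

Lemma phi_inj : injective phi.
Proof.
move=> F F' E; apply/setP => -[j e].
have := congr1 (fun f : {dffun forall j : 'I_n, {set edge (G j)}} => f j) E; rewrite /= !ffunE => /setP /(_ e).
by rewrite !in_Fr.
Qed.

Lemma count_cond i0 : #|[set F | cond i0 F]| =
  ntrees (identify (s i0) (t i0)) * \prod_(j | j != i0) ntrees (G j).
Proof.
pose A j : {set {set edge (G j)}} := [set B | if j == i0 then STI B else STG B].
have E : phi @: [set F | cond i0 F] = setXn A.
  apply/setP => f; rewrite in_setXn; apply/imsetP/forallP.
    move=> [F]; rewrite inE => /andP[cI /forallP hj] -> j; rewrite ffunE inE.
    case: (eqVneq j i0) => [Ej|ji]; first by subst j.
    by have := hj j; rewrite ji.
  move=> hf; exists (psi f).
    rewrite inE; apply/andP; split.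
      by have := hf i0; rewrite inE eqxx Fr_psi.
    apply/forallP => j; apply/implyP => ji.
    by have := hf j; rewrite inE (negbTE ji) Fr_psi.
  by apply/ffunP => j; rewrite ffunE Fr_psi.
rewrite -(card_imset _ phi_inj) E cardsXn (bigD1 i0) //=.
congr (_ * _).
  rewrite /A eqxx /ntrees; apply: eq_card => B; rewrite !inE //.
apply: eq_bigr => j ji; rewrite /A /ntrees; apply: eq_card => B.
by rewrite !inE (negbTE ji).
Qed.

Lemma count_total : ntrees CG =
  \sum_(i < n) ntrees (identify (s i) (t i)) * \prod_(j | j != i) ntrees (G j).
Proof. by rewrite count_sum; apply: eq_bigr => i _; rewrite count_cond. Qed.

End Neck.

Local Open Scope ring_scope.

Theorem theorem4p12 :
  (forall (n : nat) (G : 'I_n -> mgraph) (s t : forall i, vert (G i)),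
     (2 <= n)%N ->
     (forall i, connected (G i)) ->
     (forall i, s i != t i) ->
     (ntrees (@necklace n G s t))%:R =
       (\prod_(i < n) (ntrees (G i))%:R : rat) *
       \sum_(i < n) (ntrees (identify (s i) (t i)))%:R / (ntrees (G i))%:R)
  /\
  (forall (n : nat) (G : mgraph) (s t : vert G),
     (2 <= n)%N ->
     connected G ->
     s != t ->
     ntrees (@necklace n (fun _ => G) (fun _ => s) (fun _ => t)) =
       (n * ntrees G ^ n.-1 * ntrees (identify s t))%N).
Proof.
split.
  move=> n G s t hn hc hst.
  rewrite (count_total hn hst) natr_sum mulr_sumr; apply: eq_bigr => i _.
  have ti : (ntrees (G i))%:R != 0 :> rat by rewrite pnatr_eq0 -lt0n ntrees_gt0.
  rewrite natrM natr_prod [X in _ = X * _](bigD1 i) //=.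
  by rewrite mulrAC mulrCA mulfV // mulr1.
move=> n G s t hn hc hst.
rewrite (count_total (G := fun _ => G) hn (fun _ => hst)).
rewrite (eq_bigr (fun _ => ntrees (identify s t) * ntrees G ^ n.-1)%N); last first.
  move=> i _; congr (_ * _)%N.
  rewrite (_ : (\prod_(j | j != i) ntrees G = \prod_(j in predC1 i) ntrees G)%N) //.
  by rewrite prod_nat_const cardC1 card_ord.
rewrite sum_nat_const card_ord.
by rewrite mulnA [(n * _)%N]mulnC -mulnA mulnC; congr (_ * _)%N; rewrite mulnC.
Qed.
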